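(* Let $1\le s\le n-1$ and ${\bf v}^s=(\frac1s,\dots,\frac1s,0,\dots,0)$ (with $s$ prizes equal to $1/s$). If $s<n/2$, then $M({\bf v}^s,\theta)$ and hence the equilibrium effort $x^*({\bf v}^s,\theta)$ are decreasing in $\theta\in[0,1]$; if $s>n/2$, they are increasing in $\theta\in[0,1]$.
   Context: Fix an integer $n\ge 2$ and a noise distribution with cdf $F$ and density $f$ on $\mathbb R$ (integrals finite). For $r=1,\dots,n$ let $g_r(u)=u^{n-r}(1-u)^{r-1}$ and $\beta_r=\binom{n-1}{r-1}\int g_r'(F(t))f(t)^2dt$; $B_r=\sum_{k=1}^r\beta_k$, which for $1\le r\le n-1$ equals $r\binom{n-1}{r}\int F(t)^{n-1-r}[1-F(t)]^{r-1}f(t)^2dt>0$. For prize vectors ${\bf v}$ ($v_1\ge\dots\ge v_n\ge0$, $\sum v_r=1$) let $R({\bf v})=\sum_r\beta_rv_r$, $L({\bf v})=-\frac1n\sum_{r=1}^n\sum_{s<r}(\beta_r+\beta_s)(v_s-v_r)$, $M({\bf v},\theta)=R({\bf v})+\theta L({\bf v})$, $\theta\in[0,1]$. The effort cost $c$ is strictly increasing, differentiable and strictly convex on $[0,\bar x]$, $\bar x=c^{-1}(1)$, with $c(0)=c'(0)=0$; the symmetric equilibrium effort $x^*({\bf v},\theta)$ solves $c'(x^* )=M({\bf v},\theta)$. *)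

(* Defs.v *)
From HB Require Import structures.
From mathcomp Require Import all_boot all_order all_algebra.
From mathcomp Require Import all_classical all_reals all_analysis.
Set Implicit Arguments. Unset Strict Implicit. Unset Printing Implicit Defensive.
Import Order.TTheory GRing.Theory Num.Theory.
Import numFieldNormedType.Exports.
Local Open Scope classical_set_scope.
Local Open Scope ring_scope.

Section Contest.
Variable R : realType.

(* g_r(u) = u^(n-r) (1-u)^(r-1), as a polynomial; ranks r are 1-based nats *)
Definition gpoly (n r : nat) : {poly R} := 'X^(n - r) * (1 - 'X) ^+ r.-1.

Definition beta (F f : R -> R) (n r : nat) : R :=
  'C(n.-1, r.-1)%:R *
  Rintegral (@lebesgue_measure R) setT
    (fun t => (gpoly n r)^`().[F t] * f t ^+ 2).

(* prize vectors are functions of the rank r = 1..n *)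
Definition Rev (F f : R -> R) (n : nat) (v : nat -> R) : R :=
  \sum_(1 <= r < n.+1) beta F f n r * v r.

Definition Lev (F f : R -> R) (n : nat) (v : nat -> R) : R :=
  - (n%:R)^-1 * \sum_(1 <= r < n.+1) \sum_(1 <= s < r)
      (beta F f n r + beta F f n s) * (v s - v r).

Definition Mev (F f : R -> R) (n : nat) (v : nat -> R) (theta : R) : R :=
  Rev F f n v + theta * Lev F f n v.

Definition vsprize (s : nat) (r : nat) : R :=
  if (r <= s)%N then (s%:R)^-1 else 0.

End Contest.

(* Main.v *)
Require Import Defs.
From HB Require Import structures.
From mathcomp Require Import all_boot all_order all_algebra.
From mathcomp Require Import all_classical all_reals all_analysis.
Import Order.TTheory GRing.Theory Num.Theory.
Import numFieldNormedType.Exports.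
Local Open Scope classical_set_scope.
Local Open Scope ring_scope.

From mathcomp Require Import ring lra zify.
From mathcomp Require Import measurable_realfun.
Set Implicit Arguments. Unset Strict Implicit. Unset Printing Implicit Defensive.

Section Conv.
Variable R : realType.
Lemma deriv_lim (c : R -> R) y : derivable c y 1 ->
  (fun h => h^-1 * (c (h + y) - c y)) @ 0^' --> derive1 c y.
Proof.
move=> d; rewrite /derive1.
have E : (fun h : R => h^-1 *: (c (h + y) - c y)) = (fun h => h^-1 *: ((c \o shift y) (h *: 1) - c y)).
  by apply/funext => h /=; rewrite [h *: 1]mulr1.
rewrite E; exact: d.
Qed.

Lemma conv_deriv_mono (c : R -> R) (xbar : R)
  (hcder : forall x, 0 <= x -> x <= xbar -> derivable c x 1)
  (hcconv : forall x y t, 0 <= x -> x < y -> y <= xbar -> 0 < t -> t < 1 ->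
     c (t * x + (1 - t) * y) < t * c x + (1 - t) * c y) y x :
  0 <= y -> y < x -> x <= xbar -> derive1 c y <= derive1 c x.
Proof.
move=> y0 yx xb.
have D0 : 0 < x - y by rewrite subr_gt0.
set B := c x - c y.
have k1 : forall h, 0 < h -> h < x - y -> h^-1 * (c (h + y) - c y) <= B / (x - y).
  move=> h h0 hD.
  have t0 : 0 < 1 - h / (x - y) by rewrite subr_gt0 ltr_pdivrMr // mul1r.
  have t1 : 1 - h / (x - y) < 1 by rewrite ltrBlDr ltrDl divr_gt0.
  have := hcconv _ _ _ y0 yx xb t0 t1.
  have -> : (1 - h / (x - y)) * y + (1 - (1 - h / (x - y))) * x = h + y.
    by field; rewrite lt0r_neq0.
  rewrite (_ : (1 - h / (x - y)) * c y + (1 - (1 - h / (x - y))) * c x = c y + h / (x - y) * B); last first.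
    by rewrite /B; field; rewrite lt0r_neq0.
  move=> H.
  have H2 : c (h + y) - c y <= h / (x - y) * B by rewrite lerBlDl ltW.
  have hi : 0 <= h^-1 by rewrite invr_ge0 ltW.
  have := ler_wpM2l hi H2.
  rewrite (_ : h^-1 * (h / (x - y) * B) = B / (x - y)) //.
  by field; rewrite (lt0r_neq0 h0) (lt0r_neq0 D0).
have k2 : forall h, -(x - y) < h -> h < 0 -> B / (x - y) <= h^-1 * (c (h + x) - c x).
  move=> h hD h0.
  set k := - h.
  have k0 : 0 < k by rewrite /k oppr_gt0.
  have kD : k < x - y by rewrite /k ltrNl.
  have t0 : 0 < k / (x - y) by rewrite divr_gt0.
  have t1 : k / (x - y) < 1 by rewrite ltr_pdivrMr // mul1r.
  have := hcconv _ _ _ y0 yx xb t0 t1.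
  have -> : k / (x - y) * y + (1 - k / (x - y)) * x = h + x.
    by rewrite /k; field; rewrite lt0r_neq0.
  rewrite (_ : k / (x - y) * c y + (1 - k / (x - y)) * c x = c x - k / (x - y) * B); last first.
    by rewrite /B; field; rewrite lt0r_neq0.
  move=> H.
  have H2 : k / (x - y) * B <= c x - c (h + x) by rewrite lerBrDl -lerBrDr ltW.
  have ki : 0 <= k^-1 by rewrite invr_ge0 ltW.
  have := ler_wpM2l ki H2.
  rewrite (_ : k^-1 * (k / (x - y) * B) = B / (x - y)); last first.
    by field; rewrite (lt0r_neq0 k0) (lt0r_neq0 D0).
  move=> H3; apply: (le_trans H3).
  rewrite (_ : k^-1 * (c x - c (h + x)) = h^-1 * (c (h + x) - c x)) //.
  rewrite /k invrN mulNr -mulrN opprB //.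
have rsub : forall (g : R -> R) (l : R), g z @[z --> 0^'] --> l -> g z @[z --> 0^'+] --> l.
  move=> g l gl.
  have sub : (g z @[z --> 0^'+]) `=>` (g z @[z --> 0^']).
    move=> P /= [e e0 H]; exists e => // z zb z0.
    by apply: H => //; rewrite gt_eqF.
  exact: (cvg_trans sub gl).
have lsub : forall (g : R -> R) (l : R), g z @[z --> 0^'] --> l -> g z @[z --> 0^'-] --> l.
  move=> g l gl.
  have sub : (g z @[z --> 0^'-]) `=>` (g z @[z --> 0^']).
    move=> P /= [e e0 H]; exists e => // z zb z0.
    by apply: H => //; rewrite lt_eqF.
  exact: (cvg_trans sub gl).
have L1 := rsub _ _ (deriv_lim (hcder _ y0 (ltW (lt_le_trans yx xb)))).
have L2 := lsub _ _ (deriv_lim (hcder _ (ltW (le_lt_trans y0 yx)) xb)).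
apply: (@le_trans _ _ (B / (x - y))).
  rewrite -(cvg_lim _ L1) //; apply: limr_le; first by apply/cvg_ex; eexists; exact: L1.
  near=> h; apply: k1; [near: h; exact: nbhs_right_gt | near: h; exact: nbhs_right_lt].
rewrite -(cvg_lim _ L2) //; apply: limr_ge; first by apply/cvg_ex; eexists; exact: L2.
near=> h; apply: k2; [near: h; apply: nbhs_left_gt; rewrite oppr_lt0 // | near: h; exact: nbhs_left_lt].
Unshelve. all: by end_near.
Qed.
End Conv.

Section P.
Variable R : realType.
Definition Qp (n s : nat) : {poly R} :=
  \sum_(1 <= k < s.+1) 'C(n.-1, k.-1)%:R *: (gpoly R n k)^`().

Lemma dXab (a b : nat) : ('X^(a.+1) * (1 - 'X)^+(b.+1) : {poly R})^`() =
  'X^a * (1 - 'X)^+b * ((a.+1)%:R * (1 - 'X) - (b.+1)%:R * 'X).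
Proof.
rewrite derivM derivXn deriv_exp derivB derivC derivX.
rewrite !succnK -[_ *+ a.+1]mulr_natr -[_ *+ b.+1]mulr_natr !exprS.
ring.
Qed.

Lemma sc (n : nat) (p : {poly R}) : (n%:R : R) *: p = p * n%:R.
Proof. by rewrite scaler_nat mulr_natr. Qed.

Lemma Qform j k : Qp (j + k).+2 k.+1 = ((j + k).+1 * 'C(j + k, k))%:R *: ('X^j * (1 - 'X)^+k).
Proof.
elim: k j => [|k IH] j.
  rewrite /Qp big_nat1 /gpoly addn0 bin0 muln1 expr0 mulr1 scale1r.
  have -> : (j.+2 - 1 = j.+1)%N by lia.
  by rewrite mulr1 derivXn succnK scaler_nat.
rewrite /Qp big_nat_recr // -/(Qp _ _).
have -> : (j + k.+1).+2 = (j.+1 + k).+2 by rewrite addSnnS.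
rewrite IH /gpoly.
have -> : ((j.+1 + k).+2 - k.+2 = j.+1)%N by lia.
rewrite dXab !succnK.
have H1 : (k.+1 * 'C((j.+1 + k).+1, k.+1) = (j.+1 + k).+1 * 'C(j.+1 + k, k))%N.
  by rewrite -mul_bin_diag.
have H2 : (j.+1 * 'C((j.+1 + k).+1, k.+1) = (j.+1 + k).+1 * 'C(j.+1 + k, k.+1))%N.
  rewrite mul_bin_down; congr (_ * _)%N; lia.
rewrite -H1 -addSnnS -H2 !sc !natrM !exprS.
rewrite -[LHS]/(_ + _).
ring.
Qed.
Lemma Qfull N : Qp N.+2 N.+2 = 0.
Proof.
rewrite /Qp big_nat_recr // -/(Qp _ _).
have := Qform 0 N; rewrite add0n => ->.
rewrite /gpoly subnn !succnK binn !expr0 !mul1r muln1.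
rewrite binn.
rewrite deriv_exp derivB derivC derivX scale1r sc -[_ *+ N.+1]mulr_natr.
rewrite -[LHS]/(_ + _). rewrite succnK.
ring.
Qed.
Notation mu := (@lebesgue_measure R).

Lemma Bsum_int n (F f : R -> R)
  (hbeta : forall r, (1 <= r <= n)%N ->
     mu.-integrable setT (fun t => ((gpoly R n r)^`().[F t] * f t ^+ 2)%:E)) s :
  (s <= n)%N ->
  mu.-integrable setT (fun t => ((Qp n s).[F t] * f t ^+ 2)%:E) /\
  \sum_(1 <= k < s.+1) beta F f n k = Rintegral mu setT (fun t => (Qp n s).[F t] * f t ^+ 2).
Proof.
elim: s => [|s IH] sn.
  rewrite /Qp !big_geq //.
  have E : (fun t => (0 : {poly R}).[F t] * f t ^+ 2) = (fun _ => 0).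
    by apply/funext => t; rewrite horner0 mul0r.
  rewrite E; split.
    by apply: (eq_integrable measurableT _ _ _ (integrable0 mu setT)) => // t _; rewrite horner0 mul0r.
  by rewrite Rintegral_cst // mul0r.
have [I1 E1] := IH (ltnW sn).
have I2 := hbeta s.+1 (sn : (1 <= s.+1 <= n)%N).
have I3 := integrableZl measurableT ('C(n.-1, s)%:R) I2.
have EQ : (fun t => ((Qp n s.+1).[F t] * f t ^+ 2)) =
   (fun t => (Qp n s).[F t] * f t ^+ 2 + 'C(n.-1, s)%:R * ((gpoly R n s.+1)^`().[F t] * f t ^+ 2)).
  apply/funext => t; rewrite /Qp big_nat_recr // -/(Qp _ _).
  rewrite -[(_ + _).[_]]/((_ + _).[_]) hornerD hornerZ /=; ring.
rewrite EQ; split.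
  apply: (eq_integrable measurableT _ _ _ (integrableD measurableT I1 I3)) => //= t _.
  by rewrite -EFinM -EFinD (congr1 (fun g => g t) EQ).
rewrite big_nat_recr //= E1 RintegralD // RintegralZl //.
Qed.
End P.

Section Dens.
Variable R : realType.
Notation mu := (@lebesgue_measure R).
Variables (F f : R -> R).
Hypothesis hf0 : forall t, 0 <= f t.
Hypothesis hfint : mu.-integrable setT (fun t => (f t)%:E).
Hypothesis hf1 : Rintegral mu setT f = 1.
Hypothesis hF : forall t, F t = Rintegral mu `]-oo, t] f.

Lemma intS (A : set R) : measurable A -> mu.-integrable A (EFin \o f).
Proof. by move=> mA; apply: integrableS hfint. Qed.

Lemma Fdiff a b : a <= b -> F b - F a = Rintegral mu `]a, b] f.
Proof.
move=> ab; rewrite !hF.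
by apply: Rintegral_itvB => //; exact: intS.
Qed.

Lemma Fcompl a : 1 - F a = Rintegral mu `]a, +oo[ f.
Proof.
rewrite hF -hf1 -set_itvNyy.
by apply: Rintegral_itvB => //; exact: intS.
Qed.

Lemma F_ge0 t : 0 <= F t.
Proof. by rewrite hF; apply: Rintegral_ge0 => x _; exact: hf0. Qed.

Lemma F_le1 t : F t <= 1.
Proof.
have := Fcompl t; have : 0 <= Rintegral mu `]t, +oo[ f.
  by apply: Rintegral_ge0 => x _; exact: hf0.
move=> H E; rewrite -E in H; lra.
Qed.

Lemma F_mono a b : a <= b -> F a <= F b.
Proof.
move=> ab; have := Fdiff ab; have : 0 <= Rintegral mu `]a, b] f.
  by apply: Rintegral_ge0 => x _; exact: hf0.
move=> H E; rewrite -E in H; lra.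
Qed.

Lemma F_cont : continuous F.
Proof.
move=> t; apply/cvgrPdist_lt => e e0.
have [d [d0 H]] := integral_normr_continuous hfint e0.
have key : forall a b, a <= b -> b - a < d -> F b - F a < e.
  move=> a b ab bad; rewrite Fdiff //.
  have -> : Rintegral mu `]a, b] f = Rintegral mu `]a, b] (fun x => `|f x|).
    by apply: eq_Rintegral => y _; rewrite ger0_norm.
  apply: H => //.
  have M := @lebesgue_measure_itv R (Interval (BRight a) (BRight b)).
  suff : (lebesgue_measure [set` Interval (BRight a) (BRight b)] < d%:E)%E by [].
  rewrite M /=.
  case: ifPn => _; last by rewrite lte_fin.
  by rewrite -EFinB lte_fin.
exists d => //= x; rewrite /ball /= => xt.
have [tx|xt'] := leP t x.
  rewrite distrC ger0_norm ?subr_ge0 ?F_mono //; apply: key => //.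
  by rewrite distrC ger0_norm ?subr_ge0 in xt.
rewrite ger0_norm ?subr_ge0 ?F_mono ?ltW //; apply: key; first exact: ltW.
by rewrite ger0_norm ?subr_ge0 ?ltW in xt.
Qed.

Lemma big_exists (S : nat -> set (measurableTypeR R)) : {homo S : n m / (n <= m)%N >-> (n <= m)%O} ->
  (forall k, measurable (S k)) -> \bigcup_k S k = setT ->
  exists k, 3/4 < Rintegral mu (S k) f.
Proof.
move=> nd mS U.
have f0E : forall (k : nat) x, S k x -> (0 <= (f x)%:E)%E by move=> k x _; rewrite lee_fin.
have C := @ge0_nondecreasing_set_cvg_integral _ (measurableTypeR R) _ S (fun t => (f t)%:E) (@lebesgue_measure R) nd mS
  (fun k => measurable_funS measurableT (subsetT _) (measurable_int _ hfint))
  f0E.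
rewrite U in C.
have E1 : (\int[mu]_(x in setT) (f x)%:E = 1%:E)%E.
  rewrite -hf1 /Rintegral fineK //; exact: integrable_fin_num.
rewrite E1 in C.
apply: contrapT => H0.
have H : forall k, ~ (3/4 < Rintegral mu (S k) f) by move=> k Hk; apply: H0; exists k.
have : (lim ((\int[mu]_(x in S i) (f x)%:E)%E @[i --> \oo]) <= (3/4)%:E)%E.
  apply: lime_le; first by apply/cvg_ex; eexists; exact: C.
  near=> k; have Hk : Rintegral mu (S k) f <= 3/4 by rewrite leNgt; apply/negP; exact: H k.
  have I := intS (mS k).
  have FN := integrable_fin_num (mS k) I.
  rewrite -(fineK FN) lee_fin; exact: Hk.
rewrite (cvg_lim _ C) // lee_fin; lra.
Unshelve. all: by end_near.
Qed.

Lemma F_hi : exists t, 3/4 < F t.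
Proof.
have [k Hk] : exists k : nat, 3/4 < Rintegral mu `]-oo, k%:R] f.
  apply: (@big_exists (fun k : nat => (`]-oo, k%:R]%classic : set (measurableTypeR R)))).
  - move=> m n mn; apply/subsetPset; apply: subset_itvl; rewrite bnd_simp ler_nat //.
  - by move=> k.
  - apply/seteqP; split => // x _ /=.
    exists (Num.trunc `|x|).+1 => //=; rewrite in_itv /=.
    apply: ltW; apply: le_lt_trans (truncnS_gt _); exact: ler_norm.
by exists k%:R; rewrite hF.
Qed.

Lemma F_lo : exists t, F t < 1/4.
Proof.
have [k Hk] : exists k : nat, 3/4 < Rintegral mu `]-(k%:R), +oo[ f.
  apply: (@big_exists (fun k : nat => (`]-(k%:R), +oo[%classic : set (measurableTypeR R)))).
  - move=> m n mn; apply/subsetPset; apply: subset_itvr; rewrite bnd_simp lerN2 ler_nat //.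
  - by move=> k.
  - apply/seteqP; split => // x _ /=.
    exists (Num.trunc `|x|).+1 => //=; rewrite in_itv /= andbT ltrNl.
    apply: le_lt_trans (truncnS_gt _); rewrite -normrN; exact: ler_norm.
exists (- k%:R); have := Fcompl (- k%:R) => E.
have : 3/4 < 1 - F (-k%:R) by rewrite E.
lra.
Qed.

Lemma F_mid : exists u w, u < w /\ F u = 1/4 /\ F w = 3/4.
Proof.
have [t0 H0] := F_lo; have [t1 H1] := F_hi.
have t01 : t0 <= t1.
  rewrite leNgt; apply/negP => H; have := F_mono (ltW H); lra.
have Fc : {within `[t0, t1], continuous F} by apply: continuous_subspaceT; exact: F_cont.
have [u _ Fu] : exists2 u, u \in `[t0, t1] & F u = 1/4.
  apply: IVT => //; rewrite ge_min le_max; apply/andP; split; apply/orP; [left|right]; lra.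
have [w _ Fw] : exists2 w, w \in `[t0, t1] & F w = 3/4.
  apply: IVT => //; rewrite ge_min le_max; apply/andP; split; apply/orP; [left|right]; lra.
exists u, w; split => //.
rewrite ltNge; apply/negP => H; have := F_mono H; lra.
Qed.

Lemma pos_int (P : R -> R) (k : R) (k0 : 0 < k)
  (hP0 : forall u, 0 <= u <= 1 -> 0 <= P u)
  (hPk : forall u, 1/4 <= u <= 3/4 -> k <= P u)
  (hint : mu.-integrable setT (fun t => (P (F t) * f t ^+ 2)%:E)) :
  0 < Rintegral mu setT (fun t => P (F t) * f t ^+ 2).
Proof.
have [u [w [uw [Fu Fw]]]] := F_mid.
set I := (`]u, w]%classic : set (measurableTypeR R)).
have mI : measurable I by exact: measurable_itv.
have mf : measurable_fun (setT : set (measurableTypeR R)) f.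
  by apply/measurable_EFinP; exact: (measurable_int _ hfint).
have mf2 : measurable_fun (setT : set (measurableTypeR R)) (fun x => f x ^+ 2) by exact: measurable_funX.
have If : Rintegral mu I f = 1/2.
  have := Fdiff (ltW uw); rewrite Fu Fw => <-; lra.
set X := (\int[mu]_(x in I) (f x ^+ 2)%:E)%E.
have X0 : (0 <= X)%E by apply: integral_ge0 => x _; rewrite lee_fin sqr_ge0.
have Xpos : (0 < X)%E.
  rewrite lt_neqAle X0 andbT; apply/negP => /eqP X0'.
  set eps := (w - u)^-1 / 4.
  have wu0 : 0 < w - u by rewrite subr_gt0.
  have eps0 : 0 < eps by rewrite divr_gt0 // invr_gt0.
  have : (\int[mu]_(x in I) (f x)%:E <= \int[mu]_(x in I) (eps + (4 * eps)^-1 * f x ^+ 2)%:E)%E.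
    apply: ge0_le_integral => //.
    - by move=> x _; rewrite lee_fin.
    - by apply/measurable_EFinP; apply: measurable_funS mf.
    - apply/measurable_EFinP; apply: measurable_funD => //.
      apply: measurable_funM => //; apply: measurable_funS mf2 => //.
    - move=> x _; rewrite lee_fin -subr_ge0.
      rewrite (_ : eps + (4 * eps)^-1 * f x ^+ 2 - f x = (f x - 2 * eps) ^+ 2 / (4 * eps)).
        by apply: divr_ge0; [exact: sqr_ge0 | rewrite mulr_ge0 // ltW].
      by field; rewrite lt0r_neq0.
  have muI : mu I = (w - u)%:E.
    have M := @lebesgue_measure_itv R (Interval (BRight u) (BRight w)).
    rewrite /I; move: M => /= ->; rewrite lte_fin uw -EFinB //.
  have E : (\int[mu]_(x in I) (eps + (4 * eps)^-1 * f x ^+ 2)%:E =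
            eps%:E * mu I + ((4 * eps)^-1)%:E * X)%E.
    rewrite (eq_integral (fun x : measurableTypeR R => eps%:E + ((4 * eps)^-1)%:E * (f x ^+ 2)%:E)%E); last first.
      by move=> x _; rewrite EFinD EFinM.
    have c0 : 0 <= (4 * eps)^-1 by rewrite invr_ge0 mulr_ge0 // ltW.
    have h1 : forall x, I x -> (0 <= eps%:E)%E by move=> x _; rewrite lee_fin ltW.
    have h2 : forall x, I x -> (0 <= ((4 * eps)^-1)%:E * (f x ^+ 2)%:E)%E.
      by move=> x _; rewrite -EFinM lee_fin mulr_ge0 ?sqr_ge0.
    have h3 : forall x, I x -> (0 <= (f x ^+ 2)%:E)%E by move=> x _; rewrite lee_fin sqr_ge0.
    have m2 : measurable_fun I (fun x => (f x ^+ 2)%:E).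
      by apply/measurable_EFinP; apply: measurable_funS mf2.
    have m3 : measurable_fun I (fun x => ((4 * eps)^-1)%:E * (f x ^+ 2)%:E)%E.
      exact: emeasurable_funM.
    rewrite (ge0_integralD (@lebesgue_measure R) mI h1 (measurable_cst _) h2 m3).
    by rewrite integral_cst // (ge0_integralZl_EFin (@lebesgue_measure R) mI h3 m2 c0).
  rewrite E -X0' mule0 adde0 muI.
  have -> : (\int[mu]_(x in I) (f x)%:E = (1/2)%:E)%E.
    rewrite -If /Rintegral fineK //; exact: (integrable_fin_num mI (intS mI)).
  rewrite -EFinM lee_fin /eps => H.
  have : (w - u)^-1 / 4 * (w - u) = 1/4 by field; rewrite lt0r_neq0.
  lra.
have G0 : forall t, 0 <= P (F t) * f t ^+ 2.
  move=> t; apply: mulr_ge0; last exact: sqr_ge0.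
  by apply: hP0; rewrite F_ge0 F_le1.
have mG : measurable_fun (setT : set (measurableTypeR R)) (fun t => (P (F t) * f t ^+ 2)%:E).
  by case/integrableP : hint.
have h3 : forall x, I x -> (0 <= (f x ^+ 2)%:E)%E by move=> x _; rewrite lee_fin sqr_ge0.
have m2 : measurable_fun I (fun x => (f x ^+ 2)%:E).
  by apply/measurable_EFinP; apply: measurable_funS mf2.
have k0' : 0 <= k by exact: ltW.
have L : (k%:E * X <= \int[mu]_(x in setT) (P (F x) * f x ^+ 2)%:E)%E.
  apply: le_trans; last first.
    apply: (ge0_subset_integral (@lebesgue_measure R) mI measurableT mG) => //.
    by move=> x _; rewrite lee_fin.
  rewrite -(ge0_integralZl_EFin (@lebesgue_measure R) mI h3 m2 k0').
  apply: ge0_le_integral => //.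
  - by move=> x _; rewrite -EFinM lee_fin mulr_ge0 ?sqr_ge0.
  - exact: emeasurable_funM.
  - by apply: measurable_funS mG.
  - move=> x; rewrite /I /= in_itv /= => /andP[ux xw].
    rewrite -EFinM lee_fin ler_wpM2r ?sqr_ge0 //; apply: hPk.
    by rewrite -Fu -Fw !F_mono // ltW.
apply: fine_gt0; apply/andP; split.
  by apply: lt_le_trans L; rewrite mule_gt0 // lte_fin.
have := integrable_fin_num measurableT hint.
by rewrite fin_numE => /andP[_ /eqP H]; rewrite ltey; apply/eqP.
Qed.
End Dens.

Section Alg.
Variable R : realType.
Lemma Lcalc (b : nat -> R) (n s : nat) (hs1 : (1 <= s)%N) (hsn : (s < n)%N)
  (hB : \sum_(1 <= k < n.+1) b k = 0) :
  - (n%:R)^-1 * \sum_(1 <= r < n.+1) \sum_(1 <= q < r) (b r + b q) * (vsprize R s q - vsprize R s r)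
  = - ((n%:R - 2 * s%:R) / (n%:R * s%:R)) * \sum_(1 <= k < s.+1) b k.
Proof.
set B := \sum_(1 <= k < s.+1) b k.
have hB2 : \sum_(s.+1 <= k < n.+1) b k = - B.
  by move: hB; rewrite (big_cat_nat _ (n:=s.+1)) //= -/B; [move=> H; lra | lia].
rewrite (big_cat_nat _ (n:=s.+1)) //=; last by lia.
rewrite big_nat_cond big1 ?add0r; last first.
  move=> r /andP[/andP[r1 rs] _]; rewrite big_nat_cond big1 // => q /andP[/andP[_ qr] _].
  rewrite /vsprize ifT; last by lia.
  rewrite ifT; last by lia.
  by rewrite subrr mulr0.
have inner : forall r, (s.+1 <= r < n.+1)%N ->
  \sum_(1 <= q < r) (b r + b q) * (vsprize R s q - vsprize R s r) = (s%:R * b r + B) / s%:R.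
  move=> r /andP[sr rn].
  rewrite (big_cat_nat _ (n:=s.+1)); [|by []|exact: sr].
  rewrite -[LHS]/(_ + _).
  rewrite [X in _ + X]big_nat_cond [X in _ + X]big1 ?addr0; last first.
    move=> q /andP[/andP[sq qr] _]; rewrite /vsprize ifF; last by lia.
    rewrite ifF; last by lia.
    by rewrite subrr mulr0.
  rewrite big_nat_cond (eq_bigr (fun q => (b r + b q) / s%:R)); last first.
    move=> q /andP[/andP[q1 qs] _]; rewrite /vsprize ifT; last by lia.
    rewrite ifF; last by lia.
    by rewrite subr0.
  rewrite -big_nat_cond -mulr_suml big_split /= sumr_const_nat -/B.
  by rewrite subSS subn0 mulr_natl.
rewrite big_nat_cond (eq_bigr (fun r => (s%:R * b r + B) / s%:R)); last first.
  by move=> r /andP[H _]; exact: inner.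
rewrite -big_nat_cond -mulr_suml big_split /= -mulr_sumr hB2 sumr_const_nat.
have s0 : (0 : R) < s%:R by rewrite ltr0n.
have n0 : (0 : R) < n%:R by rewrite ltr0n; lia.
rewrite subSS -[B *+ _]mulr_natr natrB; last by lia.
field; rewrite (lt0r_neq0 s0) (lt0r_neq0 n0) //.
Qed.
End Alg.

Theorem corollary1 (R : realType) (n s : nat) (F f c : R -> R) (xbar : R)
    (xstar : R -> R)
  (* the number of contestants and the number of prizes *)
  (hn : (2 <= n)%N) (hs1 : (1 <= s)%N) (hs2 : (s <= n.-1)%N)
  (* f is a probability density on R and F its cdf *)
  (hf0 : forall t, 0 <= f t)
  (hfint : (@lebesgue_measure R).-integrable setT (fun t => (f t)%:E))
  (hf1 : Rintegral (@lebesgue_measure R) setT f = 1)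
  (hF : forall t, F t = Rintegral (@lebesgue_measure R) `]-oo, t] f)
  (* the integrals defining beta_r are finite *)
  (hbeta : forall r, (1 <= r <= n)%N ->
     (@lebesgue_measure R).-integrable setT
       (fun t => ((gpoly R n r)^`().[F t] * f t ^+ 2)%:E))
  (* the effort cost c on [0, xbar], xbar = c^-1(1) *)
  (hxbar0 : 0 <= xbar) (hcxbar : c xbar = 1)
  (hcinc : forall x y, 0 <= x -> x < y -> y <= xbar -> c x < c y)
  (hcder : forall x, 0 <= x -> x <= xbar -> derivable c x 1)
  (hcconv : forall x y t, 0 <= x -> x < y -> y <= xbar -> 0 < t -> t < 1 ->
     c (t * x + (1 - t) * y) < t * c x + (1 - t) * c y)
  (hc0 : c 0 = 0) (hc'0 : derive1 c 0 = 0)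
  (* xstar theta = x^*(v^s, theta): the symmetric equilibrium effort, c'(xstar) = M(v^s, theta) *)
  (hxstar : forall theta, 0 <= theta <= 1 ->
     0 <= xstar theta <= xbar /\
     derive1 c (xstar theta) = Mev F f n (vsprize R s) theta) :
  ((s.*2 < n)%N ->
     forall th1 th2, 0 <= th1 -> th1 < th2 -> th2 <= 1 ->
       Mev F f n (vsprize R s) th2 < Mev F f n (vsprize R s) th1 /\
       xstar th2 < xstar th1) /\
  ((n < s.*2)%N ->
     forall th1 th2, 0 <= th1 -> th1 < th2 -> th2 <= 1 ->
       Mev F f n (vsprize R s) th1 < Mev F f n (vsprize R s) th2 /\
       xstar th1 < xstar th2).
Proof.
set M := Mev F f n (vsprize R s).
set B := \sum_(1 <= k < s.+1) beta F f n k.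
have sn : (s < n)%N by lia.
have Bn : \sum_(1 <= k < n.+1) beta F f n k = 0.
  have [_ ->] := Bsum_int hbeta (leqnn n).
  have -> : Qp R n n = 0 by rewrite (_ : n = (n.-2).+2); [exact: Qfull | lia].
  rewrite (@eq_Rintegral _ _ _ _ _ (fun _ => 0)); last by move=> t _; rewrite horner0 mul0r.
  by rewrite Rintegral_cst // mul0r.
have Bpos : 0 < B.
  have [Iq ->] : _ /\ B = _ := Bsum_int hbeta (ltnW sn).
  have := Qform R (n.-1 - s) s.-1.
  rewrite (_ : ((n.-1 - s + s.-1).+2 = n)%N); last by lia.
  rewrite (_ : s.-1.+1 = s); last by lia.
  set cc := ((n.-1 - s + s.-1).+1 * 'C(n.-1 - s + s.-1, s.-1))%:R.
  move=> QE.
  have c0 : (0 : R) < cc by rewrite /cc ltr0n muln_gt0 /= bin_gt0; lia.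
  have PE : forall u, (Qp R n s).[u] = cc * (u ^+ (n.-1 - s) * (1 - u) ^+ s.-1).
    by move=> u; rewrite QE !hornerE.
  apply: (@pos_int R F f hf0 hfint hf1 hF (fun u => (Qp R n s).[u])
            (cc * ((1/4) ^+ (n.-1 - s) * (1/4) ^+ s.-1))).
  - by rewrite mulr_gt0 // mulr_gt0 // exprn_gt0.
  - move=> u /andP[u0 u1]; rewrite PE.
    apply: mulr_ge0; first exact: ltW.
    by apply: mulr_ge0; apply: exprn_ge0; rewrite ?subr_ge0.
  - move=> u /andP[u0 u1]; rewrite PE; apply: ler_wpM2l; first exact: ltW.
    have q0 : (0 : R) <= 1/4 by lra.
    apply: ler_pM; try exact: exprn_ge0.
    + by apply: lerXn2r; rewrite ?nnegrE; lra.
    + by apply: lerXn2r; rewrite ?nnegrE; lra.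
  - exact: Iq.
have LE : Lev F f n (vsprize R s) = - ((n%:R - 2 * s%:R) / (n%:R * s%:R)) * B.
  by rewrite /Lev Lcalc.
have MD : forall th1 th2, M th2 - M th1 = (th2 - th1) * Lev F f n (vsprize R s).
  by move=> th1 th2; rewrite /M /Mev; ring.
have n0 : (0 : R) < n%:R by rewrite ltr0n; lia.
have s0 : (0 : R) < s%:R by rewrite ltr0n; lia.
have XS : forall th1 th2, 0 <= th1 -> th2 <= 1 -> th1 < th2 ->
    M th2 < M th1 -> xstar th2 < xstar th1.
  move=> th1 th2 h1 h2 h12 Mlt.
  have r1 : 0 <= th1 <= 1 by rewrite h1 /= (ltW (lt_le_trans h12 h2)).
  have r2 : 0 <= th2 <= 1 by rewrite h2 andbT (ltW (le_lt_trans h1 h12)).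
  have [/andP[x1a x1b] d1] := hxstar th1 r1.
  have [/andP[x2a x2b] d2] := hxstar th2 r2.
  move: Mlt; rewrite /M -d1 -d2 => Mlt.
  rewrite ltNge; apply/negP => H.
  move: H; rewrite le_eqVlt => /orP[/eqP H|H].
    by move: Mlt; rewrite H ltxx.
  have := conv_deriv_mono hcder hcconv x1a H x2b.
  by rewrite leNgt Mlt.
have XS' : forall th1 th2, 0 <= th1 -> th2 <= 1 -> th1 < th2 ->
    M th1 < M th2 -> xstar th1 < xstar th2.
  move=> th1 th2 h1 h2 h12 Mlt.
  have r1 : 0 <= th1 <= 1 by rewrite h1 /= (ltW (lt_le_trans h12 h2)).
  have r2 : 0 <= th2 <= 1 by rewrite h2 andbT (ltW (le_lt_trans h1 h12)).
  have [/andP[x1a x1b] d1] := hxstar th1 r1.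
  have [/andP[x2a x2b] d2] := hxstar th2 r2.
  move: Mlt; rewrite /M -d1 -d2 => Mlt.
  rewrite ltNge; apply/negP => H.
  move: H; rewrite le_eqVlt => /orP[/eqP H|H].
    by move: Mlt; rewrite H ltxx.
  have := conv_deriv_mono hcder hcconv x2a H x1b.
  by rewrite leNgt Mlt.
split.
  move=> h2s th1 th2 h1 h12 h2.
  have hr : (2 * s%:R < n%:R :> R) by rewrite -natrM ltr_nat mul2n.
  have L0 : Lev F f n (vsprize R s) < 0.
    rewrite LE mulNr oppr_lt0; apply: mulr_gt0 => //; apply: divr_gt0; [lra | exact: mulr_gt0].
  have Mlt : M th2 < M th1.
    have d0 : 0 < th2 - th1 by rewrite subr_gt0.
    by rewrite -subr_lt0 MD pmulr_rlt0.
  by split => //; apply: XS.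
move=> h2s th1 th2 h1 h12 h2.
have hr : (n%:R < 2 * s%:R :> R) by rewrite -natrM ltr_nat mul2n.
have L0 : 0 < Lev F f n (vsprize R s).
  rewrite LE; apply: mulr_gt0 => //; rewrite -mulNr; apply: divr_gt0; [lra | exact: mulr_gt0].
have Mlt : M th1 < M th2.
  have d0 : 0 < th2 - th1 by rewrite subr_gt0.
  by rewrite -subr_gt0 MD mulr_gt0.
by split => //; apply: XS'.
Qed.
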